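(* Let $\Delta t_n>0$, $\mathbf u^{n-1}\in W^{\rm en}_{\mathcal D}$, and let $\mathbf u^n\in W^{\rm ad}_{\mathcal D}$ be a solution of the scheme $$\int_\Omega\pi_{\mathcal D}\mathbf u^n\pi_{\mathcal D}\mathbf v\,dx+\Delta t_n\sum_{K\in\mathcal M}\boldsymbol\delta_K\mathbf h(\mathbf u^n)\cdot\mathbf B_K(\mathbf u^n)\boldsymbol\delta_K\mathbf v=\int_\Omega\pi_{\mathcal D}\mathbf u^{n-1}\pi_{\mathcal D}\mathbf v\,dx\quad\forall\mathbf v\in W_{\mathcal D}.$$ Then $$\mathcal E_{\mathcal D}(\mathbf u^n)+\Delta t_n\sum_{K\in\mathcal M}\boldsymbol\delta_K\mathbf h(\mathbf u^n)\cdot\mathbf B_K(\mathbf u^n)\boldsymbol\delta_K\mathbf h(\mathbf u^n)\le\mathcal E_{\mathcal D}(\mathbf u^{n-1}).$$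
   Context: Continuous data: $\Omega\subset\mathbb R^d$ ($d\in\{2,3\}$) connected bounded open polyhedral. (A1) $\eta:\mathbb R_+\to\mathbb R_+$ continuous, $\eta(0)=0$, $\eta>0$ on $u\ne0$, nondecreasing on $\mathbb R_+$, extended evenly. (A2) $p\in L^1_{loc}(\mathbb R_+)$ absolutely continuous, increasing on $(0,\infty)$, $p(u)\to+\infty$ as $u\to\infty$; if $p(0)=\lim_{u\downarrow0}p(u)$ is finite, $p(u)=2p(0)-p(-u)$ for $u\le0$; $I_p=(0,\infty)$ if $p(0)=-\infty$, else $\mathbb R$; $\sqrt\eta p'\in L^1_{loc}(\mathbb R_+)$, $\sqrt{\eta(u)}p(u)\to0$ as $u\downarrow0$. (A3) $\Lambda$ measurable, symmetric, uniformly elliptic and bounded. (A4) $\Gamma(u)=\int_1^u(p(a)-p(1))da$ on $\bar I_p$ ($+\infty$ for $u<0$ if $p(0)=-\infty$). (A5) $V$ Lipschitz. Mesh: cells $\mathcal M$ (disjoint open polyhedra covering $\bar\Omega$, star-shaped w.r.t. $x_K$), vertices $\mathcal V$ at $x_s$, $\mathcal V_K$, $\mathcal M_s$ as usual, simplicial submesh $\mathcal T$ (each cell split into simplices with apex $x_K$), $W_{\mathcal D}=\{\mathbf v=(v_K,v_s)\}$; $\pi_{\mathcal T}\mathbf v$ the continuous piecewise affine interpolant on $\mathcal T$ (values $v_K$ at $x_K$, $v_s$ at $x_s$, and at face centers $x_\sigma=\sum\beta_{\sigma,s}x_s$ when $d=3$ the value $\sum\beta_{\sigma,s}v_s$); $\nabla_{\mathcal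 T}=\nabla\pi_{\mathcal T}$; $\mathbf e_\beta$ unit vectors. Mass lumping: $\alpha_{K,s}\ge0$, $\sum_s\alpha_{K,s}\le1$, $m_{K,s}=\alpha_{K,s}|K|$, $m_s=\sum_{K\in\mathcal M_s}m_{K,s}$, $m_K=|K|-\sum_sm_{K,s}$, disjoint $\omega_K,\omega_{K,s}\subset K$ covering $K$ up to null sets with these measures, $\omega_s=\bigcup_K\omega_{K,s}$, $\pi_{\mathcal D}\mathbf v=\sum v_K\mathbf 1_{\omega_K}+\sum v_s\mathbf 1_{\omega_s}$. $a^K_{s,s'}=\int_K\Lambda\nabla_{\mathcal T}\mathbf e_s\cdot\nabla_{\mathcal T}\mathbf e_{s'}$, $\mathbf A_K=(a^K_{s,s'})_{s,s'\in\mathcal V_K}$, $\boldsymbol\delta_K\mathbf v=(v_K-v_s)_{s\in\mathcal V_K}$. Scheme: $\mathbf V=(V(x_K),V(x_s))$; $W^{\rm ad}_{\mathcal D}=\{\mathbf v:v_\nu\in I_p\ \forall\nu\}$; $\mathcal E_{\mathcal D}(\mathbf v)=\int_\Omega(\Gamma(\pi_{\mathcal D}\mathbf v)+\pi_{\mathcal D}\mathbf v\pi_{\mathcal D}\mathbf V)$; $W^{\rm en}_{\mathcal D}=\{\mathcal E_{\mathcal D}<\infty\}$; $\mathbf h(\mathbf u)=(p(u_\nu)+V_\nu)_{\nu\in\mathcal M\cup\mathcal V}$; $\eta_{K,s}(\mathbf u)=(\eta(u_K)+\eta(u_s))/2$; $\mathbf M_K(\mathbf u)=\operatorname{diag}(\sqrt{\eta_{K,s}(\mathbf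 u)})_{s\in\mathcal V_K}$; $\mathbf B_K(\mathbf u)=\mathbf M_K(\mathbf u)\mathbf A_K\mathbf M_K(\mathbf u)$. *)

(* Defs.v *)
From HB Require Import structures.
From mathcomp Require Import all_boot all_order all_algebra.
From mathcomp Require Import all_classical all_reals all_analysis.
Set Implicit Arguments. Unset Strict Implicit. Unset Printing Implicit Defensive.
Import Order.TTheory GRing.Theory Num.Theory.
Import numFieldNormedType.Exports.
Local Open Scope classical_set_scope.
Local Open Scope ring_scope.

Section Defs.
Variable R : realType.
Local Notation mu := (@lebesgue_measure R).

Definition eta_assumptions (eta : R -> R) : Prop :=
  [/\ continuous eta, eta 0 = 0,
      (forall u, u != 0 -> 0 < eta u),
      (forall x y, 0 <= x -> x <= y -> eta x <= eta y) &
      (forall u, eta (- u) = eta u)].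

Definition abs_cont_on (f : R -> R) (a b : R) : Prop :=
  forall e : R, 0 < e -> exists2 d : R, 0 < d &
    forall (n : nat) (lo hi : nat -> R),
      (forall i, (i < n)%N -> a <= lo i /\ lo i <= hi i /\ hi i <= b) ->
      (forall i, (i.+1 < n)%N -> hi i <= lo i.+1) ->
      \sum_(i < n) (hi i - lo i) < d ->
      \sum_(i < n) `|f (hi i) - f (lo i)| < e.

Definition L1loc_Rplus (f : R -> R) : Prop :=
  forall b : R, 0 < b -> mu.-integrable `]0, b] (EFin \o f).

(* (A2).  [p0fin] says whether p(0) = lim_{u↓0} p(u) is finite, and then
   [p0] is that limit. *)
Definition p_assumptions (eta : R -> R) (p : R -> R) (p0fin : bool) (p0 : R)
  : Prop :=
  L1loc_Rplus p /\
  (forall a b, 0 < a -> a <= b -> abs_cont_on p a b) /\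
  (forall x y, 0 < x -> x < y -> p x < p y) /\
  (p x @[x --> +oo] --> +oo) /\
  (if p0fin then p x @[x --> 0^'+] --> p0
            else p x @[x --> 0^'+] --> -oo) /\
  (p0fin -> forall u, u <= 0 -> p u = 2 * p0 - p (- u)) /\
  L1loc_Rplus (fun u => Num.sqrt (eta u) * derive1 p u) /\
  ((fun u => Num.sqrt (eta u) * p u) @ 0^'+ --> 0).

Definition in_Ip (p0fin : bool) (u : R) : bool := if p0fin then true else 0 < u.

(* (A4) Gamma(u) = int_1^u (p(a) - p(1)) da (oriented integral) *)
Definition Gamma_fin (p : R -> R) (u : R) : R :=
  if 1 <= u then Rintegral mu `[1, u] (fun a => p a - p 1)
  else - Rintegral mu `[u, 1] (fun a => p a - p 1).

Definition Gamma (p0fin : bool) (p : R -> R) (u : R) : \bar R :=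
  if (~~ p0fin) && (u < 0) then +oo%E else (Gamma_fin p u)%:E.

Section Mesh.
Variables (cell vert : finType) (VK : cell -> {set vert})
          (vol : cell -> R) (alpha : cell -> vert -> R).

Definition mKs (K : cell) (s : vert) : R := alpha K s * vol K.
Definition m_vert (s : vert) : R := \sum_(K : cell | s \in VK K) mKs K s.
Definition m_cell (K : cell) : R := vol K - \sum_(s in VK K) mKs K s.
Definition mass (nu : cell + vert) : R :=
  match nu with inl K => m_cell K | inr s => m_vert s end.

(* int_Omega pi_D u * pi_D v dx  (pi_D piecewise constant on the
   omega_K, omega_s, which have measures m_K, m_s) *)
Definition L2D (u v : cell + vert -> R) : R :=
  \sum_(nu : cell + vert) mass nu * u nu * v nu.

Definition energyD (p0fin : bool) (p : R -> R) (Vv : cell + vert -> R)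
  (v : cell + vert -> R) : \bar R :=
  (\sum_(nu : cell + vert)
     ((mass nu)%:E * (Gamma p0fin p (v nu) + (v nu * Vv nu)%:E)))%E.

Definition hvec (p : R -> R) (Vv : cell + vert -> R) (u : cell + vert -> R)
  (nu : cell + vert) : R := p (u nu) + Vv nu.

Definition etaKs (eta : R -> R) (u : cell + vert -> R) (K : cell) (s : vert)
  : R := (eta (u (inl K)) + eta (u (inr s))) / 2.

Definition deltaK (v : cell + vert -> R) (K : cell) (s : vert) : R :=
  v (inl K) - v (inr s).

(* B_K(u) = M_K(u) A_K M_K(u) *)
Definition BK (eta : R -> R) (A : cell -> vert -> vert -> R)
  (u : cell + vert -> R) (K : cell) (s s' : vert) : R :=
  Num.sqrt (etaKs eta u K s) * A K s s' * Num.sqrt (etaKs eta u K s').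

Definition diffusionD (eta : R -> R) (A : cell -> vert -> vert -> R)
  (u w v : cell + vert -> R) : R :=
  \sum_(K : cell) \sum_(s in VK K) \sum_(s' in VK K)
     deltaK w K s * BK eta A u K s s' * deltaK v K s'.

End Mesh.
End Defs.

(* Main.v *)
Require Import Defs.
From HB Require Import structures.
From mathcomp Require Import all_boot all_order all_algebra.
From mathcomp Require Import all_classical all_reals all_analysis.
From mathcomp Require Import ring lra measurable_realfun lebesgue_integral_theory.lebesgue_integrable.
Import Order.TTheory GRing.Theory Num.Theory.
Import numFieldNormedType.Exports.
Local Open Scope classical_set_scope.
Local Open Scope ring_scope.

Section Int.
Variable R : realType.
Local Notation mu := (@lebesgue_measure R).

Lemma int_oc_cc (f : R -> R) (x y : R) : x <= y ->
  mu.-integrable `]x, y] (EFin \o f) -> mu.-integrable `[x, y] (EFin \o f).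
Proof.
move=> xy /integrableP[mf ifoo]; apply/integrableP; split.
  have -> : [set` `[x, y]] = [set x] `|` [set` `]x, y]] :> set R.
    apply/seteqP; split => t /=; rewrite !in_itv /=.
      move=> /andP[xt ty]; case: (eqVneq t x) => tx; first by left.
      by right; rewrite ty andbT lt_neqAle eq_sym tx.
    by move=> [->|/andP[a b]]; [rewrite lexx /=|apply/andP; split]; lra.
  apply/measurable_funU => //; split => //; exact: measurable_fun_set1.
rewrite -integral_itv_obnd_cbnd //.
apply/measurable_EFinP; apply: measurableT_comp => //.
by apply/measurable_EFinP.
Qed.

Lemma Rint_oc_cc (f : R -> R) (x y : R) :
  mu.-integrable `]x, y] (EFin \o f) ->
  Rintegral mu `[x, y] f = Rintegral mu `]x, y] f.
Proof.
move=> /integrableP[mf _]; rewrite /Rintegral -integral_itv_obnd_cbnd //.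
Qed.

Lemma Rint_split (f : R -> R) (x y z : R) : x <= y -> y <= z ->
  mu.-integrable `[x, z] (EFin \o f) ->
  Rintegral mu `[x, z] f = Rintegral mu `[x, y] f + Rintegral mu `[y, z] f.
Proof.
move=> xy yz fi.
have E : [set` `[x, z]] = [set` `[x, y]] `|` [set` `]y, z]] :> set R.
  apply/seteqP; split => t /=; rewrite !in_itv /=.
    move=> /andP[xt tz]; case: (lerP t y) => ty.
      by left; rewrite ?xt ?ty.
    by right; rewrite ?ty ?tz.
  move=> [/andP[a b]|/andP[a b]]; apply/andP; split; lra.
have fi2 : mu.-integrable `]y, z] (EFin \o f).
  apply: integrableS fi => //; rewrite E; exact: subsetUr.
rewrite E Rintegral_setU //; first by rewrite (Rint_oc_cc _ _ _ fi2).
  by rewrite -E.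
apply/disj_setPS => t [] /=; rewrite !in_itv /= => /andP[_ a] /andP[b _]; lra.
Qed.

Lemma int_cst_itv (c : R) (i : interval R) (a b : R) :
  mu.-integrable [set` Interval (BSide true a) (BSide false b)] (EFin \o (fun _ : R => c)) /\
  mu.-integrable [set` Interval (BSide false a) (BSide false b)] (EFin \o (fun _ : R => c)).
Proof.
split; apply: measurable_bounded_integrable => //.
- by rewrite [X in (X < _)%E](lebesgue_measure_itv `[a, b]); case: ifP => _ //=; rewrite -EFinB ltry.
- exact: bounded_cst.
- by rewrite [X in (X < _)%E](lebesgue_measure_itv `]a, b]); case: ifP => _ //=; rewrite -EFinB ltry.
- exact: bounded_cst.
Qed.

Lemma mu_cc (a b : R) : a <= b -> fine (mu [set` `[a, b]]) = b - a.
Proof.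
move=> ab; rewrite [X in fine X](lebesgue_measure_itv `[a, b]) /=; case: ifPn => //=; rewrite lte_fin -leNgt => h.
have -> : a = b by apply/eqP; rewrite eq_le ab h.
by rewrite subrr.
Qed.

Lemma mu_oc (a b : R) : a <= b -> fine (mu [set` `]a, b]]) = b - a.
Proof.
move=> ab; rewrite [X in fine X](lebesgue_measure_itv `]a, b]) /=; case: ifPn => //=; rewrite lte_fin -leNgt => h.
have -> : a = b by apply/eqP; rewrite eq_le ab h.
by rewrite subrr.
Qed.

Definition Ior (f : R -> R) (x y : R) : R :=
  if x <= y then Rintegral mu `[x, y] f else - Rintegral mu `[y, x] f.

Lemma chasles (f : R -> R) (J : R -> Prop)
  (Hint : forall x y, J x -> J y -> x <= y -> mu.-integrable `[x, y] (EFin \o f))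
  x y z : J x -> J y -> J z -> Ior f x z = Ior f x y + Ior f y z.
Proof.
move=> Jx Jy Jz; rewrite /Ior.
case: (lerP x y) => xy; case: (lerP y z) => yz; case: (lerP x z) => xz.
- by rewrite (Rint_split f _ _ _ xy yz (Hint _ _ Jx Jz xz)).
- lra.
- have := Rint_split f _ _ _ xz (ltW yz) (Hint _ _ Jx Jy xy); lra.
- have := Rint_split f _ _ _ (ltW xz) xy (Hint _ _ Jz Jy (ltW yz)); lra.
- have := Rint_split f _ _ _ (ltW xy) xz (Hint _ _ Jy Jz yz); lra.
- have := Rint_split f _ _ _ yz (ltW xz) (Hint _ _ Jy Jx (ltW xy)); lra.
- lra.
- have := Rint_split f _ _ _ (ltW yz) (ltW xy) (Hint _ _ Jz Jx (ltW xz)); lra.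
Qed.

Lemma Ior_bound (f : R -> R) (a b : R)
  (Hab : a <= b -> mu.-integrable `[a, b] (EFin \o f))
  (Hba : b <= a -> mu.-integrable `[b, a] (EFin \o f))
  (Hle : forall t, a < t -> t <= b -> f t <= f b)
  (Hge : forall t, b <= t -> t <= a -> f b <= f t) :
  Ior f a b <= (b - a) * f b.
Proof.
rewrite /Ior; case: (lerP a b) => ab.
  have fi := Hab ab.
  have fi2 : mu.-integrable `]a, b] (EFin \o f).
    apply: integrableS fi => //; apply: subset_itvr; by rewrite bnd_simp.
  rewrite (Rint_oc_cc _ _ _ fi2).
  apply: (le_trans (le_Rintegral _ fi2 (int_cst_itv (f b) `[a,b] a b).2 _)) => //.
    by move=> t /=; rewrite in_itv /= => /andP[h1 h2]; apply: Hle.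
  by rewrite Rintegral_cst // mu_oc // mulrC.
have fi := Hba (ltW ab).
rewrite lerNl -mulNr opprB.
apply: (le_trans _ (le_Rintegral _ (int_cst_itv (f b) `[b,a] b a).1 fi _)) => //.
  by rewrite Rintegral_cst // mu_cc ?(ltW ab) // mulrC.
by move=> t /=; rewrite in_itv /= => /andP[h1 h2]; apply: Hge.
Qed.
End Int.
Arguments Ior {R}. Arguments chasles {R}. Arguments Ior_bound {R}. Arguments int_cst_itv {R}.
Arguments int_oc_cc {R}. Arguments Rint_oc_cc {R}. Arguments Rint_split {R}.
Arguments mu_cc {R}. Arguments mu_oc {R}.


Section PSec.
Variables (R : realType) (eta p : R -> R) (p0fin : bool) (p0 : R).
Hypothesis Hp : p_assumptions eta p p0fin p0.
Local Notation mu := (@lebesgue_measure R).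

Lemma mono_pos s t : 0 < s -> s <= t -> p s <= p t.
Proof.
case: Hp => _ [_ [Hinc _]] s0; rewrite le_eqVlt => /predU1P[->//|st].
exact/ltW/Hinc.
Qed.

Lemma p0_le : p0fin -> forall u, 0 < u -> p0 <= p u.
Proof.
move=> Hfin u u0; case: Hp => _ [_ [Hinc [_ [Hlim _]]]].
move: Hlim; rewrite Hfin => Hlim.
rewrite leNgt; apply/negP => pu.
have H1 : \forall t \near 0^'+, p u < p t by apply: (cvgr_gt _ Hlim).

have H2 := nbhs_right_gt (0 : R).
have H3 := nbhs_right_lt u0.
suff [t [h1 [h2 h3]]] : exists t : R, p u < p t /\ 0 < t /\ t < u.
  by have := Hinc t u h2 h3; lra.
apply: (@filter_ex _ (0^'+ : set_system R)).
by apply: filterI => //; apply: filterI.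
Qed.

Lemma p_nd : p0fin -> forall s t, s <= t -> p s <= p t.
Proof.
move=> Hfin.
have Hrefl : forall u, u <= 0 -> p u = 2 * p0 - p (- u).
  by case: Hp => _ [_ [_ [_ [_ [H _]]]]]; exact: H.
have pz : p 0 = p0 by have := Hrefl 0 (lexx _); rewrite oppr0; lra.
have ge0 : forall v, 0 <= v -> p0 <= p v.
  move=> v; rewrite le_eqVlt => /predU1P[<-|v0]; first by rewrite pz.
  exact: p0_le.
have ndn : forall v w, 0 <= v -> v <= w -> p v <= p w.
  move=> v w; rewrite le_eqVlt => /predU1P[<-|v0] vw.
    by rewrite pz; apply: ge0.
  exact: mono_pos.
move=> s t st; case: (lerP t 0) => t0.
  rewrite (Hrefl s) ?(le_trans st t0) // (Hrefl t) //.
  have : p (- t) <= p (- s) by apply: ndn; rewrite ?oppr_ge0 ?lerN2.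
  lra.
case: (lerP s 0) => s0.
  rewrite (Hrefl s) //; have := ge0 (- s); rewrite oppr_ge0 => /(_ s0).
  have := ge0 t (ltW t0); lra.
exact: mono_pos.
Qed.

Definition Jp (u : R) : bool := p0fin || (0 <= u).
Definition Kp (u : R) : bool := p0fin || (0 < u).
Definition fp (a : R) : R := p a - p 1.

Lemma Hint x y : Jp x -> Jp y -> x <= y -> mu.-integrable `[x, y] (EFin \o fp).
Proof.
rewrite /Jp; case Hfin: p0fin => /= Jx Jy xy.
  apply: measurable_bounded_integrable => //.
  - by rewrite [X in (X < _)%E](lebesgue_measure_itv `[x, y]); case: ifP => _ //=; rewrite -EFinB ltry.
  - apply: nondecreasing_measurable => // s t st; rewrite /fp lerD2r; exact: p_nd.
  - rewrite /bounded_near; near=> M => t /=; rewrite in_itv /= => /andP[xt ty].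
    apply: (@le_trans _ _ (`|fp x| + `|fp y|)).
      have h1 : fp x <= fp t by rewrite /fp lerD2r; exact: p_nd.
      have h2 : fp t <= fp y by rewrite /fp lerD2r; exact: p_nd.
      have := ler_norm (fp y); have := ler_norm (- fp x); rewrite normrN.
      rewrite ler_norml => n1 n2; have := normr_ge0 (fp x); have := normr_ge0 (fp y).
      by move=> *; apply/andP; split; lra.
    by near: M; exact: nbhs_pinfty_ge.
apply: int_oc_cc => //.
have y1 : 0 < y + 1 by lra.
have HL : mu.-integrable `]0, y + 1] (EFin \o p) by case: Hp => H _; exact: H.
have HL2 : mu.-integrable `]0, y + 1] (EFin \o fp).
  have -> : EFin \o fp = (fun t => (EFin \o p) t - (EFin \o (fun _ : R => p 1)) t)%E.
    by apply/funext => t /=; rewrite EFinB.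
  apply: integrableB => //; by case: (int_cst_itv (p 1) `[x, y] 0 (y + 1)).
apply: integrableS HL2 => //.
move=> t /=; rewrite !in_itv /= => /andP[a b]; apply/andP; split; lra.
Unshelve. all: by end_near.
Qed.

Lemma Gamma_convex a b : Jp a -> Kp b ->
  Gamma_fin p b - Gamma_fin p a <= (b - a) * (p b - p 1).
Proof.
move=> Ja Kb.
have Jb : Jp b by move: Kb; rewrite /Jp /Kp; case: p0fin => //= /ltW.
have J1 : Jp 1 by rewrite /Jp ler01 orbT.
have eq u : Gamma_fin p u = Ior fp 1 u by [].
rewrite !eq (chasles fp (fun u => is_true (Jp u)) Hint 1 a b J1 Ja Jb) addrC addKr.
apply: Ior_bound.
- exact: Hint.
- exact: Hint.
- move=> t hat htb; rewrite /fp lerD2r.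
  move: Ja; rewrite /Jp; case Hfin: p0fin => /= Ja; first exact: p_nd.
  by apply: mono_pos => //; lra.
- move=> t bt ta; rewrite /fp lerD2r.
  move: Kb; rewrite /Kp; case Hfin: p0fin => /= Kb; first exact: p_nd.
  exact: mono_pos.
Qed.

End PSec.
Arguments Jp {R}. Arguments Kp {R}. Arguments Gamma_convex {R eta p p0fin p0}.

Theorem lemma3p1 (R : realType) (d : nat)
  (eta p : R -> R) (p0fin : bool) (p0 : R) (V : 'rV[R]_d -> R)
  (cell vert : finType) (VK : cell -> {set vert})
  (pts : cell + vert -> 'rV[R]_d)
  (vol : cell -> R) (alpha : cell -> vert -> R)
  (A : cell -> vert -> vert -> R)
  (dt : R) (uold unew : cell + vert -> R) :
  (d == 2)%N || (d == 3)%N ->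
  eta_assumptions eta ->
  p_assumptions eta p p0fin p0 ->
  (exists k : R, k.-lipschitz V) ->
  (forall K, 0 < vol K) ->
  (forall K s, s \in VK K -> 0 <= alpha K s) ->
  (forall K, \sum_(s in VK K) alpha K s <= 1) ->
  0 < dt ->
  (energyD VK vol alpha p0fin p (fun nu => V (pts nu)) uold < +oo)%E ->
  (forall nu, in_Ip p0fin (unew nu)) ->
  (forall v : cell + vert -> R,
     L2D VK vol alpha unew v
     + dt * diffusionD VK eta A unew (hvec p (fun nu => V (pts nu)) unew) v
     = L2D VK vol alpha uold v) ->
  (energyD VK vol alpha p0fin p (fun nu => V (pts nu)) unew
   + (dt * diffusionD VK eta A unew (hvec p (fun nu => V (pts nu)) unew)
                               (hvec p (fun nu => V (pts nu)) unew))%:E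
   <= energyD VK vol alpha p0fin p (fun nu => V (pts nu)) uold)%E.
Proof.
move=> _ _ Hp _ Hvol Halpha Hsum Hdt Eold Hin Hsch.
set Vn := fun nu => V (pts nu).
set m := mass VK vol alpha.
set h := hvec p Vn unew.
set D := diffusionD VK eta A unew h h.
have m0 : forall nu, 0 <= m nu.
  case=> [K|s] /=.
    rewrite /m /mass /m_cell /mKs -big_distrl /=.
    have := Hsum K; have := Hvol K; nra.
  rewrite /m /mass /m_vert; apply: sumr_ge0 => K sK.
  by apply: mulr_ge0; [exact: Halpha|exact: ltW].
have Hcons : L2D VK vol alpha unew (fun _ => 1) = L2D VK vol alpha uold (fun _ => 1).
  rewrite -Hsch; suff -> : diffusionD VK eta A unew h (fun _ => 1) = 0.
    by rewrite mulr0 addr0.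
  rewrite /diffusionD; apply: big1 => K _; apply: big1 => s _; apply: big1 => s' _.
  by rewrite /deltaK subrr mulr0.
have Hh := Hsch h.
set cb := fun nu => Gamma_fin p (unew nu) + unew nu * Vn nu.
set ca := fun nu => Gamma_fin p (uold nu) + uold nu * Vn nu.
have Enew : energyD VK vol alpha p0fin p Vn unew = (\sum_nu m nu * cb nu)%:E.
  rewrite /energyD -sumEFin; apply: eq_bigr => nu _.
  have := Hin nu; rewrite /in_Ip /Gamma /cb /m.
  case Hf: p0fin => /= Hb; first by rewrite -EFinD -EFinM.
  by rewrite ltNge (ltW Hb) /= -EFinD -EFinM.
have Hgood : forall nu, 0 < m nu -> Jp p0fin (uold nu).
  move=> nu mnu; apply/negPn/negP => nJ.
  move: nJ; rewrite /Jp negb_or => /andP[nf na].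
  rewrite -ltNge in na.
  suff : energyD VK vol alpha p0fin p Vn uold = +oo%E.
    by move=> E; move: Eold; rewrite /Vn E ltxx.
  apply/esum_eqyP.
    move=> nu' _; rewrite /Gamma; case: ifP => _.
      rewrite addye //; apply/eqP => E.
      have : (0 <= (mass VK vol alpha nu')%:E * +oo)%E.
        by apply: mule_ge0 => //; rewrite lee_fin; exact: m0.
      by rewrite E.
    by rewrite -EFinD -EFinM.
  exists nu; split => //.
  rewrite /Gamma (negbTE nf) na /= addye // muleC gt0_mulye //.

have Eold' : energyD VK vol alpha p0fin p Vn uold = (\sum_nu m nu * ca nu)%:E.
  rewrite /energyD -sumEFin; apply: eq_bigr => nu _.
  have := m0 nu; rewrite le_eqVlt => /predU1P[E|mpos].
    by rewrite /m in E *; rewrite -E mul0e mul0r.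
  have := Hgood nu mpos; rewrite /Jp /Gamma /ca /m.
  case Hf: p0fin => /= Ha; first by rewrite -EFinD -EFinM.
  by rewrite ltNge Ha /= -EFinD -EFinM.
rewrite Enew Eold' -EFinD lee_fin.
have Hterm : forall nu, m nu * cb nu - m nu * ca nu <=
    m nu * (unew nu - uold nu) * (h nu - p 1).
  move=> nu; have := m0 nu; rewrite le_eqVlt => /predU1P[<-|mpos].
    by rewrite !mul0r subrr.
  have Kb : Kp p0fin (unew nu).
    by have := Hin nu; rewrite /in_Ip /Kp; case Hf: p0fin.
  have := Gamma_convex Hp _ _ (Hgood nu mpos) Kb.
  rewrite /cb /ca /h /hvec => G.
  rewrite -mulrBr -mulrA; apply: ler_wpM2l; first exact: ltW.
  have -> : p (unew nu) + Vn nu - p 1 = (p (unew nu) - p 1) + Vn nu by ring.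
  rewrite mulrDr [X in _ <= _ + X]mulrBl; lra.
have Hsumt : \sum_nu (m nu * cb nu - m nu * ca nu) <= \sum_nu m nu * (unew nu - uold nu) * (h nu - p 1).
  by apply: ler_sum => nu _; exact: Hterm.
rewrite sumrB in Hsumt.
have Hid : \sum_nu m nu * (unew nu - uold nu) * (h nu - p 1) =
  (L2D VK vol alpha unew h - L2D VK vol alpha uold h)
  - p 1 * (L2D VK vol alpha unew (fun _ => 1) - L2D VK vol alpha uold (fun _ => 1)).
  rewrite /L2D -!sumrB mulr_sumr -sumrB; apply: eq_bigr => nu _.
  rewrite /m; ring.
move: Hsumt; rewrite Hid Hcons subrr mulr0 subr0.
rewrite -/D in Hh; lra.
Qed.
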